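(* Let $k$ be any field and let $f_1,\ldots,f_r$ be homogeneous polynomials (forms) in $k[x,y]$ of degrees $d_1\ge d_2\ge\cdots\ge d_r$ such that the ideal $(f_1,\ldots,f_r)$ is minimally generated by $f_1,\ldots,f_r$. Then, coefficientwise, $$\big(k[x,y]/(f_1,\ldots,f_r)\big)(z)\;\le\;\frac{1+z+\cdots+z^{d_r-1}-\big(z^{d_{r-1}}+z^{d_{r-2}}+\cdots+z^{d_1}\big)}{1-z}.$$
   Context: For a graded $k$-algebra $R=\bigoplus_{i\ge0}R_i$ with finite-dimensional graded pieces, its Hilbert series is $R(z)=\sum_{i\ge0}\dim_k R_i\,z^i$. Here $x,y$ have degree $1$. For power series $A(z)=\sum a_iz^i$, $B(z)=\sum b_iz^i$, $A\le B$ coefficientwise means $a_i\le b_i$ for all $i$. *)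

(* Defs.v *)
From HB Require Import structures.
From mathcomp Require Import all_boot all_order all_algebra.
From Stdlib Require Import ClassicalEpsilon.
Set Implicit Arguments. Unset Strict Implicit. Unset Printing Implicit Defensive.
Import Order.TTheory GRing.Theory Num.Theory.
Local Open Scope ring_scope.

(* k[x,y] is modelled as {poly {poly k}}: polynomials in y whose
   coefficients are polynomials in x. *)
Notation bipoly k := {poly {poly k}}.

Definition coef2 (k : fieldType) (p : bipoly k) (a b : nat) : k := (p`_b)`_a.

(* p is a form (homogeneous polynomial) of degree d (0 is homogeneous of any degree) *)
Definition homogeneous (k : fieldType) (d : nat) (p : bipoly k) : Prop :=
  forall a b : nat, coef2 p a b != 0 -> (a + b)%N = d.

Definition in_ideal (k : fieldType) (n : nat) (P : pred 'I_n)
  (f : 'I_n -> bipoly k) (h : bipoly k) : Prop :=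
  exists g : 'I_n -> bipoly k, h = \sum_(j < n | P j) g j * f j.

Definition minimally_generated (k : fieldType) (n : nat) (f : 'I_n -> bipoly k) : Prop :=
  forall i : 'I_n, ~ in_ideal (fun j => j != i) f (f i).

Definition form_coords (k : fieldType) (i : nat) (h : bipoly k) : 'rV[k]_(i.+1) :=
  \row_(j < i.+1) coef2 h (i - j) j.

Definition ideal_part (k : fieldType) (n : nat) (f : 'I_n -> bipoly k) (i : nat)
  (v : 'rV[k]_(i.+1)) : Prop :=
  exists h, homogeneous i h /\ in_ideal predT f h /\ form_coords i h = v.

Definition ideal_part_space (k : fieldType) (n : nat) (f : 'I_n -> bipoly k) (i : nat)
  : {vspace 'rV[k]_(i.+1)} :=
  epsilon (inhabits 0%VS) (fun U : {vspace 'rV[k]_(i.+1)} =>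
     forall v : 'rV[k]_(i.+1), v \in U <-> ideal_part f v).

(* dim_k (k[x,y]/I)_i = dim R_i - dim I_i = (i+1) - dim I_i *)
Definition hilbert_fun (k : fieldType) (n : nat) (f : 'I_n -> bipoly k) (i : nat) : nat :=
  (i.+1 - \dim (ideal_part_space f i))%N.

(* numerator 1 + z + ... + z^(d_r - 1) - (z^(d_(r-1)) + ... + z^(d_1)),
   generators indexed by 'I_r.+1 with ord_max the last one (degree d_r) *)
Definition bound_numerator (r : nat) (d : 'I_r.+1 -> nat) : {poly int} :=
  \sum_(m < d ord_max) 'X^m - \sum_(j < r.+1 | j != ord_max) 'X^(d j).

(* coefficient of z^i in N(z)/(1-z) = N(z) (1 + z + z^2 + ...) *)
Definition bound_coef (r : nat) (d : 'I_r.+1 -> nat) (i : nat) : int :=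
  \sum_(m < i.+1) (bound_numerator d)`_m.

(* Main.v *)
Require Import Defs.
From HB Require Import structures.
From mathcomp Require Import all_boot all_order all_algebra.
From Stdlib Require Import ClassicalEpsilon Classical.
From mathcomp Require Import zify.
Set Implicit Arguments. Unset Strict Implicit. Unset Printing Implicit Defensive.
Import Order.TTheory GRing.Theory Num.Theory.
Local Open Scope ring_scope.

Section Poly.
Variable k : fieldType.
Implicit Types p q g h : bipoly k.

Lemma coef2_ext p q : (forall a b, coef2 p a b = coef2 q a b) -> p = q.
Proof. by move=> H; apply/polyP => b; apply/polyP => a; exact: H. Qed.

Lemma coef2_0 a b : coef2 (0 : bipoly k) a b = 0.
Proof. by rewrite /coef2 !coef0. Qed.

Lemma coef2D p q a b : coef2 (p + q) a b = coef2 p a b + coef2 q a b.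
Proof. by rewrite /coef2 !coefD. Qed.

Lemma coef2C (c : k) p a b : coef2 (c%:P%:P * p) a b = c * coef2 p a b.
Proof. by rewrite /coef2 !coefCM. Qed.

Definition xv : bipoly k := ('X)%:P.
Definition yv : bipoly k := 'X.

Lemma coef2X p a b : coef2 (xv * p) a b = if (0 < a)%N then coef2 p a.-1 b else 0.
Proof. by rewrite /coef2 /xv coefCM coefXM; case: a. Qed.

Lemma coef2Y p a b : coef2 (yv * p) a b = if (0 < b)%N then coef2 p a b.-1 else 0.
Proof. by rewrite /coef2 /yv coefXM; case: b => //=; rewrite coef0. Qed.

Lemma coef2M p q a b : coef2 (p * q) a b =
  \sum_(j < b.+1) \sum_(i < a.+1) coef2 p i j * coef2 q (a - i) (b - j).
Proof. by rewrite /coef2 coefM coef_sum; apply: eq_bigr => j _; rewrite coefM. Qed.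

Lemma homog_nz t p a b : homogeneous t p -> (a + b)%N <> t -> coef2 p a b = 0.
Proof. by move=> H ne; apply/eqP; apply: contraT => /H. Qed.

Lemma homog0 t : homogeneous t (0 : bipoly k).
Proof. by move=> a b; rewrite coef2_0 eqxx. Qed.

Lemma homogD t p q : homogeneous t p -> homogeneous t q -> homogeneous t (p + q).
Proof.
move=> Hp Hq a b; rewrite coef2D.
case: (eqVneq (a+b)%N t) => // ne; rewrite (homog_nz Hp) ?(homog_nz Hq) ?addr0 ?eqxx //;
by apply/eqP.
Qed.

Lemma homogC t (c : k) p : homogeneous t p -> homogeneous t (c%:P%:P * p).
Proof.
move=> Hp a b; rewrite coef2C => /eqP; case: (eqVneq (a+b)%N t) => // ne.
by rewrite (homog_nz Hp) ?mulr0 ?eqxx //; apply/eqP.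
Qed.

Lemma homogX t p : homogeneous t p -> homogeneous t.+1 (xv * p).
Proof.
move=> Hp a b; rewrite coef2X; case: a => [|a] /=; first by rewrite eqxx.
move/Hp; lia.
Qed.

Lemma homogY t p : homogeneous t p -> homogeneous t.+1 (yv * p).
Proof.
move=> Hp a b; rewrite coef2Y; case: b => [|b] /=; first by rewrite eqxx.
move/Hp; lia.
Qed.

Lemma homog_coords t p q : homogeneous t p -> homogeneous t q ->
  form_coords t p = form_coords t q -> p = q.
Proof.
move=> Hp Hq E; apply: coef2_ext => a b.
case: (eqVneq (a+b)%N t) => [eab|ne]; last first.
  by rewrite (homog_nz Hp) ?(homog_nz Hq) //; apply/eqP.
subst t; have hb : (b < (a + b).+1)%N by lia.
have := congr1 (fun v : 'rV_(_) => v ord0 (Ordinal hb)) E; rewrite !mxE /=.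
by have -> : (a + b - b = a)%N by lia.
Qed.

Lemma coordsD t p q : form_coords t (p + q) = form_coords t p + form_coords t q.
Proof. by apply/rowP => j; rewrite !mxE coef2D. Qed.

Lemma coordsC t (c : k) p : form_coords t (c%:P%:P * p) = c *: form_coords t p.
Proof. by apply/rowP => j; rewrite !mxE coef2C. Qed.

Lemma coords0 t : form_coords t (0 : bipoly k) = 0.
Proof. by apply/rowP => j; rewrite !mxE coef2_0. Qed.

Definition comp n p : bipoly k :=
  \poly_(b < n.+1) \poly_(a < n.+1) (if (a + b == n)%N then coef2 p a b else 0).

Lemma coef2_comp n p a b :
  coef2 (comp n p) a b = if (a + b == n)%N then coef2 p a b else 0.
Proof.
rewrite /coef2 /comp coef_poly; case: ifP => hb.
  rewrite coef_poly; case: ifP => ha //.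
  by case: eqP => //; lia.
by rewrite coef0; case: eqP => //; lia.
Qed.

Lemma compD n p q : comp n (p + q) = comp n p + comp n q.
Proof. by apply: coef2_ext => a b; rewrite coef2D !coef2_comp coef2D; case: ifP; rewrite ?addr0. Qed.

Lemma comp0 n : comp n 0 = 0.
Proof. by apply: coef2_ext => a b; rewrite coef2_comp coef2_0; case: ifP. Qed.

Lemma comp_hom n p : homogeneous n p -> comp n p = p.
Proof.
move=> H; apply: coef2_ext => a b; rewrite coef2_comp; case: eqP => // ne.
by rewrite (homog_nz H).
Qed.

Lemma comp_mul_hom e n g q : homogeneous e q ->
  comp n (g * q) = if (e <= n)%N then comp (n - e) g * q else 0.
Proof.
move=> Hq; apply: coef2_ext => a b; rewrite coef2_comp.
case hen: (e <= n)%N.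
  rewrite !coef2M; case: (@eqP _ (a + b)%N n) => hab.
    apply: eq_bigr => j _; apply: eq_bigr => i _; rewrite coef2_comp.
    case: eqP => hij //.
    rewrite (homog_nz Hq) ?mulr0 //.
    have := ltn_ord i; have := ltn_ord j; lia.
  symmetry; apply: big1 => j _; apply: big1 => i _; rewrite coef2_comp.
  case: eqP => hij; last by rewrite mul0r.
  rewrite (homog_nz Hq) ?mulr0 //.
  have := ltn_ord i; have := ltn_ord j; lia.
rewrite coef2_0; case: (@eqP _ (a + b)%N n) => // hab; rewrite coef2M.
apply: big1 => j _; apply: big1 => i _.
rewrite (homog_nz Hq) ?mulr0 //.
have := ltn_ord i; have := ltn_ord j; lia.
Qed.

End Poly.
Arguments xv {k}. Arguments yv {k}.

Section Ideal.
Variables (k : fieldType) (n : nat) (f : 'I_n -> bipoly k).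

Lemma in_ideal_mono (P Q : pred 'I_n) h : (forall j, P j -> Q j) ->
  in_ideal P f h -> in_ideal Q f h.
Proof.
move=> HPQ [g ->]; exists (fun j => if P j then g j else 0).
rewrite big_mkcond [RHS]big_mkcond; apply: eq_bigr => j _.
case Pj: (P j); first by rewrite (HPQ _ Pj).
by case: (Q j); rewrite ?mul0r.
Qed.

Lemma in_ideal0 P : in_ideal P f 0.
Proof. by exists (fun _ => 0); rewrite big1 // => j _; rewrite mul0r. Qed.

Lemma in_idealD P h1 h2 : in_ideal P f h1 -> in_ideal P f h2 -> in_ideal P f (h1 + h2).
Proof.
move=> [g1 ->] [g2 ->]; exists (fun j => g1 j + g2 j).
by rewrite -big_split; apply: eq_bigr => j _; rewrite mulrDl.
Qed.

Lemma in_idealM P c h : in_ideal P f h -> in_ideal P f (c * h).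
Proof.
move=> [g ->]; exists (fun j => c * g j).
by rewrite mulr_sumr; apply: eq_bigr => j _; rewrite mulrA.
Qed.

Lemma in_ideal_gen (P : pred 'I_n) j : P j -> in_ideal P f (f j).
Proof.
move=> Pj; exists (fun l => if l == j then 1 else 0).
rewrite (bigD1 j) //= eqxx mul1r big1 ?addr0 // => l /andP[_ /negbTE ->].
by rewrite mul0r.
Qed.

Lemma ip0 t : @ideal_part k n f t 0.
Proof. by exists 0; split; [exact: homog0|split; [exact: in_ideal0|exact: coords0]]. Qed.

Lemma ipD t v1 v2 : @ideal_part k n f t v1 -> @ideal_part k n f t v2 -> @ideal_part k n f t (v1 + v2).
Proof.
move=> [h1 [H1 [I1 <-]]] [h2 [H2 [I2 <-]]]; exists (h1 + h2); split; first exact: homogD.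
by split; [exact: in_idealD | exact: coordsD].
Qed.

Lemma ipZ t (c : k) v : @ideal_part k n f t v -> @ideal_part k n f t (c *: v).
Proof.
move=> [h [H [I <-]]]; exists (c%:P%:P * h); split; first exact: homogC.
by split; [exact: in_idealM | exact: coordsC].
Qed.

Lemma dim_row_le t (U : {vspace 'rV[k]_(t.+1)}) : (\dim U <= t.+1)%N.
Proof. by have := dimvS (subvf U); rewrite dimvf dim_matrix; lia. Qed.

Lemma dim_add_lt (vT : vectType k) (A B : {vspace vT}) :
  ~~ (B <= A)%VS -> (\dim A < \dim (A + B))%N.
Proof.
move=> nBA; rewrite (ltn_leqif (dimv_leqif_sup (addvSl A B))).
by rewrite subv_add subvv.
Qed.

Lemma ips_exists t : exists U : {vspace 'rV[k]_(t.+1)},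
  forall v, v \in U <-> @ideal_part k n f t v.
Proof.
suff H : forall m (U : {vspace 'rV[k]_(t.+1)}), (forall v, v \in U -> @ideal_part k n f t v) ->
    (t.+1 - m <= \dim U)%N -> exists U' : {vspace 'rV[k]_(t.+1)},
      forall v, v \in U' <-> @ideal_part k n f t v.
  apply: (H t.+1 0%VS) => [v|]; last by rewrite subnn.
  by rewrite memv0 => /eqP ->; exact: ip0.
elim=> [|m IH] U HU hd.
  have eU : U = fullv.
    apply/eqP; rewrite eqEdim subvf dimvf dim_matrix /=.
    rewrite subn0 in hd; lia.
  by exists U => v; split; [exact: HU| rewrite eU memvf].
case: (classic (forall v, @ideal_part k n f t v -> v \in U)) => [all|].
  by exists U => v; split; [exact: HU|exact: all].
move=> /not_all_ex_not [v Hv]; have ipv := not_imply_elim _ _ Hv; have nvU := not_imply_elim2 _ _ Hv.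
apply: (IH (U + <[v]>)%VS).
  move=> w /memv_addP [u Hu [z /vlineP [c ->] ->]].
  by apply: ipD; [exact: HU|exact: ipZ].
have : ~~ (<[v]> <= U)%VS by rewrite -memvE; apply/negP.
move/dim_add_lt => h; apply: leq_trans h; move: hd; rewrite subSS.
by move: (\dim U) => D; clear; lia.
Qed.

Lemma ips_spec t v : v \in ideal_part_space f t <-> @ideal_part k n f t v.
Proof.
rewrite /ideal_part_space.
have := epsilon_spec (inhabits 0%VS) _ (ips_exists t); exact.
Qed.

End Ideal.

Section Shift.
Variables (k : fieldType) (t : nat).

Definition phix (v : 'rV[k]_(t.+1)) : 'rV[k]_(t.+2) :=
  \row_(j < t.+2) (if (j < t.+1)%N then v ord0 (inord j) else 0).
Definition psiy (v : 'rV[k]_(t.+1)) : 'rV[k]_(t.+2) :=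
  \row_(j < t.+2) (if (0 < j)%N then v ord0 (inord j.-1) else 0).

Fact phix_lin : linear phix.
Proof.
move=> a u w; apply/rowP => j; rewrite !mxE; case: ifP => _; rewrite ?mxE //.
by rewrite mulr0 addr0.
Qed.
Fact psiy_lin : linear psiy.
Proof.
move=> a u w; apply/rowP => j; rewrite !mxE; case: ifP => _; rewrite ?mxE //.
by rewrite mulr0 addr0.
Qed.
HB.instance Definition _ := GRing.isLinear.Build k 'rV[k]_(t.+1) 'rV[k]_(t.+2) _ phix phix_lin.
HB.instance Definition _ := GRing.isLinear.Build k 'rV[k]_(t.+1) 'rV[k]_(t.+2) _ psiy psiy_lin.

Lemma phix_inj : injective phix.
Proof.
move=> u w E; apply/rowP => j.
have hj : (j < t.+2)%N by have := ltn_ord j; lia.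
have := congr1 (fun v : 'rV_(t.+2) => v ord0 (Ordinal hj)) E; rewrite !mxE /= ltn_ord.
by rewrite inord_val.
Qed.

Lemma coords_x (h : bipoly k) : form_coords t.+1 (xv * h) = phix (form_coords t h).
Proof.
apply/rowP => j; rewrite /phix !mxE coef2X.
have := ltn_ord j; case: ifP => hj1; case: ifP => hj2 //; try (move=> _; lia).
move=> _; rewrite inordK //; congr coef2; lia.
Qed.

Lemma coords_y (h : bipoly k) : form_coords t.+1 (yv * h) = psiy (form_coords t h).
Proof.
apply/rowP => j; rewrite /psiy !mxE coef2Y.
have := ltn_ord j; case: ifP => hj1 //.
move=> hj; rewrite inordK; last lia.
congr coef2; lia.
Qed.

Lemma shift_zero (W : {vspace 'rV[k]_(t.+1)}) :
  (forall w, w \in W -> exists2 w', w' \in W & psiy w = phix w') -> \dim W = 0%N.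
Proof.
move=> H.
suff Z : forall m w, w \in W -> forall j : 'I_t.+1, (t < j + m)%N -> w ord0 j = 0.
  apply/eqP; rewrite dimv_eq0; apply/eqP/vspaceP => w; rewrite memv0.
  apply/idP/idP => [Hw|/eqP ->]; last exact: mem0v.
  apply/eqP/rowP => j; rewrite mxE (Z t.+1 w Hw j) //; lia.
elim=> [|m IH] w Hw j hj; first by have := ltn_ord j; lia.
have [w' Hw' E] := H w Hw.
have hj1 : (j.+1 < t.+2)%N by have := ltn_ord j; lia.
have := congr1 (fun v : 'rV_(t.+2) => v ord0 (Ordinal hj1)) E; rewrite /phix /psiy !mxE /=.
rewrite inord_val => ->; case: ifP => // hjt.
apply: (IH w' Hw'); rewrite inordK //; lia.
Qed.

End Shift.

Lemma sum_eq_lt (m n : nat) : (\sum_(l < n) ((m == (l : nat)) : nat))%N = ((m < n) : nat).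
Proof.
elim: n => [|n IH]; first by rewrite big_ord0.
rewrite big_ord_recr /= IH; case: (ltngtP m n) => h /=.
- by rewrite ltnS (ltnW h).
- by rewrite ltnS leqNgt h.
- by rewrite h ltnSn.
Qed.

Lemma sum_lt_min n e : (\sum_(m < n) ((m < e) : nat))%N = minn n e.
Proof.
elim: n => [|n IH]; first by rewrite big_ord0 min0n.
rewrite big_ord_recr /= IH; case: ltnP => h /=; lia.
Qed.

Section Main.
Variables (k : fieldType) (r : nat) (f : 'I_r.+1 -> bipoly k) (d : 'I_r.+1 -> nat).
Hypothesis hhom : forall j, homogeneous (d j) (f j).
Hypothesis hmin : minimally_generated f.

Lemma homog_ideal m (P : pred 'I_r.+1) h : homogeneous m h -> in_ideal P f h ->
  in_ideal (fun j => P j && (d j <= m)%N) f h.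
Proof.
move=> hh [g hg]; exists (fun j => comp (m - d j) (g j)).
rewrite -(comp_hom hh) hg.
rewrite (big_morph (comp m) (@compD k m) (@comp0 k m)).
rewrite big_mkcondr; apply: eq_bigr => j _.
by rewrite (comp_mul_hom m (g j) (@hhom j)).
Qed.

Definition gs t (s : seq 'I_r.+1) : seq 'rV[k]_(t.+1) :=
  map (fun l => form_coords t (f l)) s.

Lemma add_gens t (A : {vspace 'rV[k]_(t.+1)}) :
  (forall v, v \in A -> exists h, homogeneous t h /\
      in_ideal (fun l => d l != t) f h /\ form_coords t h = v) ->
  forall s, uniq s -> (forall l, l \in s -> d l = t) ->
  (forall v, v \in (A + <<gs t s>>)%VS -> exists h, homogeneous t h /\
      in_ideal (fun l => (d l != t) || (l \in s)) f h /\ form_coords t h = v) /\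
  (\dim A + size s <= \dim (A + <<gs t s>>))%N.
Proof.
move=> HA; elim=> [|j s IH] /=.
  move=> _ _; rewrite span_nil addv0 addn0; split => // v /HA [h [H1 [H2 H3]]].
  exists h; split => //; split => //; apply: in_ideal_mono H2 => l ->.
  by [].
move=> /andP [njs us] hs.
have [IH1 IH2] := IH us (fun l ls => hs l (mem_behead (s := j :: s) ls)).
have dj : d j = t by apply: hs; rewrite mem_head.
rewrite span_cons (addvC <[_]>%VS) addvA; split.
  move=> v /memv_addP [u Hu [z /vlineP [c ->] ->]].
  have [h [H1 [H2 H3]]] := IH1 u Hu.
  exists (h + c%:P%:P * f j); split.
    by apply: homogD => //; apply: homogC; rewrite -dj.
  split; last by rewrite coordsD coordsC H3.
  apply: in_idealD.
    apply: in_ideal_mono H2 => l /orP [->//|ls].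
    by rewrite in_cons ls !orbT.
  by apply: in_idealM; apply: in_ideal_gen; rewrite in_cons eqxx orbT.
have nsub : ~~ (<[form_coords t (f j)]> <= A + <<gs t s>>)%VS.
  apply/negP; rewrite -memvE => /IH1 [h [H1 [H2 H3]]].
  have hf : h = f j by apply: homog_coords H3 => //; rewrite -dj.
  case: (@hmin j); rewrite -hf; apply: in_ideal_mono H2 => l /orP [|ls].
    by apply: contraNneq => ->; rewrite dj.
  by apply: contraNneq njs => <-.
have := dim_add_lt nsub; move: IH2.
move: (\dim A) (\dim (A + <<gs t s>>)%VS) (\dim _) (size s) => a b c z.
by move=> H1 H2; apply: leq_trans H2; rewrite addnS ltnS.
Qed.



Lemma step t (W : {vspace 'rV[k]_(t.+1)}) :
  (forall v, v \in W -> @ideal_part k r.+1 f t v) ->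
  exists A : {vspace 'rV[k]_(t.+2)},
   (forall v, v \in A -> exists h, homogeneous t.+1 h /\
      in_ideal (fun l => d l != t.+1) f h /\ form_coords t.+1 h = v) /\
   (\dim W + ((0 < \dim W) : nat) <= \dim A)%N.
Proof.
move=> HW.
exists (linfun (@phix k t) @: W + linfun (@psiy k t) @: W)%VS; split.
  move=> v /memv_addP [u1 /memv_imgP [w1 Hw1 ->] [u2 /memv_imgP [w2 Hw2 ->] ->]].
  rewrite !lfunE /=.
  have [h1 [H11 [H12 E1]]] := HW w1 Hw1.
  have [h2 [H21 [H22 E2]]] := HW w2 Hw2.
  exists (xv * h1 + yv * h2); split; first by apply: homogD; [apply: homogX|apply: homogY].
  split; last by rewrite coordsD coords_x coords_y E1 E2.
  have I1 := homog_ideal H11 H12; have I2 := homog_ideal H21 H22.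
  apply: in_idealD; apply: in_idealM.
    apply: in_ideal_mono I1 => l /andP [_ hl]; apply/eqP => E; move: hl; rewrite E; lia.
  apply: in_ideal_mono I2 => l /andP [_ hl]; apply/eqP => E; move: hl; rewrite E; lia.
have inj : lker (linfun (@phix k t)) == 0%VS.
  by apply/lker0P => u w; rewrite !lfunE; exact: phix_inj.
have dphi : \dim (linfun (@phix k t) @: W) = \dim W.
  by apply: limg_dim_eq; rewrite (eqP inj) capv0.
case: (posnP (\dim W)) => [->|pos]; first by [].
rewrite addn1.
have nsub : ~~ (linfun (@psiy k t) @: W <= linfun (@phix k t) @: W)%VS.
  apply/negP => sub.
  suff E0 : \dim W = 0%N by move: pos; rewrite E0.
  apply: shift_zero => w Hw.
  have : linfun (@psiy k t) w \in (linfun (@phix k t) @: W)%VS.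
    by apply: (subvP sub); apply: memv_img.
  by case/memv_imgP => w' Hw' E; exists w' => //; rewrite !lfunE in E.
have := dim_add_lt nsub; rewrite dphi; exact.
Qed.

Definition Ep t := (\sum_(m < t.+1) \sum_(j < r.+1 | j != ord_max) (((m : nat) == d j) : nat))%N.

Lemma card_deg t : size (enum [pred l : 'I_r.+1 | d l == t]) =
  ((d ord_max == t) + \sum_(j < r.+1 | j != ord_max) ((t == d j) : nat))%N.
Proof.
rewrite -cardE -sum1_card big_mkcond (bigD1 ord_max) //=; congr (_ + _)%N.
apply: eq_bigr => i _; rewrite inE eq_sym; by case: (t == d i).
Qed.

Lemma claim t : exists W : {vspace 'rV[k]_(t.+1)},
  (forall v, v \in W -> @ideal_part k r.+1 f t v) /\
  (Ep t + (t.+1 - d ord_max) <= \dim W)%N.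
Proof.
have gen : forall t' (A : {vspace 'rV[k]_(t'.+1)}),
  (forall v, v \in A -> exists h, homogeneous t' h /\
      in_ideal (fun l => d l != t') f h /\ form_coords t' h = v) ->
  exists W : {vspace 'rV[k]_(t'.+1)}, (forall v, v \in W -> @ideal_part k r.+1 f t' v) /\
    (\dim A + size (enum [pred l : 'I_r.+1 | d l == t']) <= \dim W)%N.
  move=> t' A HA.
  have hs : forall l, l \in enum [pred l : 'I_r.+1 | d l == t'] -> d l = t'.
    by move=> l; rewrite mem_enum inE => /eqP.
  have [G1 G2] := add_gens HA (enum_uniq [pred l : 'I_r.+1 | d l == t']) hs.
  exists (A + <<gs t' (enum [pred l : 'I_r.+1 | d l == t'])>>)%VS; split => //.
  move=> v /G1 [h [H1 [H2 H3]]]; exists h; split => //; split => //.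
  by apply: in_ideal_mono H2.
elim: t => [|t [W [HW hW]]].
  have [|W [HW hW]] := gen 0%N 0%VS.
    move=> v; rewrite memv0 => /eqP ->; exists 0; split; first exact: homog0.
    by split; [exact: in_ideal0 | exact: coords0].
  exists W; split => //; move: hW; rewrite dimv0 add0n card_deg /Ep big_ord1 /=.
  move: (\sum_(j < r.+1 | j != ord_max) _)%N => X.
  case: (d ord_max) => [|e] /=; lia.
have [A [HA hA]] := step HW.
have [W' [HW' hW']] := gen t.+1 A HA.
exists W'; split => //.
have E : Ep t.+1 = (Ep t + \sum_(j < r.+1 | j != ord_max) ((t.+1 == d j) : nat))%N.
  by rewrite /Ep big_ord_recr.
rewrite E; move: hW hA hW'; rewrite card_deg.
move: (Ep t) (\sum_(j < r.+1 | j != ord_max) _)%N => a X.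
move: (\dim W) (\dim A) (\dim W') => D1 D2 D3.
case: (posnP D1) => [->|pos]; case: eqP => [->|ne] /=; try (move: ne); try (move: pos); clear; lia.
Qed.

End Main.

Lemma bound_eq (r : nat) (d : 'I_r.+1 -> nat) i :
  bound_coef d i = (minn i.+1 (d ord_max))%:Z - (Ep d i)%:Z.
Proof.
rewrite /bound_coef /bound_numerator.
have E1 : forall m : nat, (\sum_(l < d ord_max) 'X^l : {poly int})`_m = ((m < d ord_max) : nat)%:R.
  by move=> m; rewrite coef_sum -sum_eq_lt natr_sum; apply: eq_bigr => l _; rewrite coefXn.
have E2 : forall m : nat, (\sum_(j < r.+1 | j != ord_max) 'X^(d j) : {poly int})`_m =
    (\sum_(j < r.+1 | j != ord_max) ((m == d j) : nat))%:R.
  by move=> m; rewrite coef_sum natr_sum; apply: eq_bigr => j _; rewrite coefXn.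
rewrite (eq_bigr (fun m : 'I_i.+1 => ((m < d ord_max) : nat)%:R -
   (\sum_(j < r.+1 | j != ord_max) (((m : nat) == d j) : nat))%:R)); last first.
  by move=> m _; rewrite coefB E1 E2.
by rewrite sumrB -!natr_sum sum_lt_min /Ep !natz.
Qed.

Theorem mainTheorem1 (k : fieldType) (r : nat)
  (f : 'I_r.+1 -> {poly {poly k}}) (d : 'I_r.+1 -> nat)
  (hhom : forall j, homogeneous (d j) (f j))
  (hdeg : forall i j : 'I_r.+1, (i <= j)%N -> (d j <= d i)%N)
  (hmin : minimally_generated f) :
  forall i : nat, ((hilbert_fun f i)%:Z <= bound_coef d i)%R.
Proof.
move=> i.
have [W [HW hW]] := claim hhom hmin i.
have sub : (W <= ideal_part_space f i)%VS.
  by apply/subvP => v Hv; apply/ips_spec; exact: HW.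
have h1 := leq_trans hW (dimvS sub).
have h2 := dim_row_le (ideal_part_space f i).
rewrite /hilbert_fun bound_eq.
move: h1 h2; move: (Ep d i) (\dim (ideal_part_space f i)) (d ord_max) => a D e.
clear; lia.
Qed.
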